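(* Let $S=S(\lambda_1,\ldots,\lambda_d)$ be a spider with $n$ vertices and let $S_L$ be its line graph (which has $n-1$ vertices). If $S$ has a connected partition of type $\mu$ for every integer partition $\mu$ of $n$, then $S_L$ has a connected partition of type $\nu$ for every integer partition $\nu$ of $n-1$.
   Context: A spider $S(\lambda_1,\ldots,\lambda_d)$, for positive integers $\lambda_1,\ldots,\lambda_d$, is the tree consisting of a vertex $v$ (the center) together with $d$ vertex-disjoint paths (legs) having $\lambda_1,\ldots,\lambda_d$ vertices respectively, where $v$ is joined by an edge to one endpoint of each leg. The line graph of a graph has the edges of the graph as vertices, two being adjacent when they share an endpoint. A connected partition of a graph $G=(V,E)$ is a partition of $V$ into blocks each inducing a connected subgraph; its type is the integer partition of $|V|$ formed by the block sizes in decreasing order. *)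

(* Defs.v *)
From mathcomp Require Import all_boot.
Set Implicit Arguments. Unset Strict Implicit. Unset Printing Implicit Defensive.

(* A simple graph is given by a finite vertex type T and an adjacency relation
   e : rel T (symmetric and irreflexive for the graphs used below). *)

(* Spider S(lam_0,...,lam_{d-1}): vertices are the centre (None) and
   Some (i, k) = the k-th vertex (k = 0 is adjacent to the centre) of leg i,
   which has lam i vertices. *)
Definition spider_vertex (d : nat) (lam : 'I_d -> nat) : finType :=
  option {i : 'I_d & 'I_(lam i)}.

Definition spider_adj (d : nat) (lam : 'I_d -> nat) : rel (spider_vertex lam) :=
  fun x y =>
    match x, y with
    | None, None => false
    | None, Some v => val (tagged v) == 0
    | Some v, None => val (tagged v) == 0
    | Some u, Some v =>
        (tag u == tag v) &&
        (((val (tagged u)).+1 == val (tagged v)) ||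
         ((val (tagged v)).+1 == val (tagged u)))
    end.

Definition is_edge (T : finType) (e : rel T) (E : {set T}) : bool :=
  [exists x, exists y, e x y && (E == [set x; y])].

Definition line_vertex (T : finType) (e : rel T) : finType :=
  {E : {set T} | is_edge e E}.

Definition line_adj (T : finType) (e : rel T) : rel (line_vertex e) :=
  fun E F => (E != F) && (val E :&: val F != set0).

Definition induces_connected (T : finType) (e : rel T) (B : {set T}) : bool :=
  [forall x in B, forall y in B,
     connect (fun u v => [&& e u v, u \in B & v \in B]) x y].

Definition is_intpart (n : nat) (mu : seq nat) : bool :=
  [&& sorted geq mu, all (fun k => 0 < k) mu & sumn mu == n].

Definition has_connected_partition (T : finType) (e : rel T) (mu : seq nat) : Prop :=
  exists P : {set {set T}},
    [/\ partition P [set: T],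
        (forall B, B \in P -> induces_connected e B) &
        sort geq [seq #|B : {set T}| | B : {set T} in P] = mu].

(* Main.v *)
Require Import Defs.
From mathcomp Require Import all_boot zify.
Set Implicit Arguments. Unset Strict Implicit. Unset Printing Implicit Defensive.

Section Spider.
Variables (d : nat) (lam : 'I_d -> nat).
Local Notation V := (spider_vertex lam).
Local Notation code := (option ('I_d * nat)).
Local Notation adj := (@spider_adj d lam).

Definition enc (x : V) : code :=
  match x with None => None | Some v => Some (tag v, val (tagged v)) end.

Lemma enc_inj : injective enc.
Proof.
case=> [[i k]|] [[j l]|] //= [] e1 e2.
subst j; congr Some; congr existT; exact: val_inj.
Qed.

Definition adjc (c c' : code) : bool :=
  match c, c' with
  | None, None => false
  | None, Some (_, m) => m == 0
  | Some (_, m), None => m == 0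
  | Some (i, m), Some (j, l) => (i == j) && ((m.+1 == l) || (l.+1 == m))
  end.

Lemma adj_enc x y : spider_adj x y = adjc (enc x) (enc y).
Proof. by case: x => [[i k]|]; case: y => [[j l]|]. Qed.

Definition nextc (rc c : code) : code :=
  match rc with
  | None => match c with None => None | Some (i, m) => if m == 0 then None else Some (i, m.-1) end
  | Some (i0, k0) =>
    match c with
    | None => Some (i0, 0)
    | Some (i, m) =>
      if i != i0 then (if m == 0 then None else Some (i, m.-1))
      else if k0 < m then Some (i, m.-1)
      else if m < k0 then Some (i, m.+1) else Some (i0, k0)
    end
  end.

Definition distc (rc c : code) : nat :=
  match rc with
  | None => match c with None => 0 | Some (_, m) => m.+1 end
  | Some (i0, k0) =>
    match c with
    | None => k0.+1
    | Some (i, m) => if i == i0 then (m - k0) + (k0 - m) else m + k0 + 2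
    end
  end.

Lemma nextc_r rc : nextc rc rc = rc.
Proof. case: rc => [[i0 k0]|] //=; rewrite eqxx /= ltnn //. Qed.

Lemma adj_nextc rc c : c != rc -> adjc c (nextc rc c).
Proof.
case: rc => [[i0 k0]|]; case: c => [[i m]|] //=.
- case: (i =P i0) => [->|/eqP ne] /=.
  + case: ltngtP => h /=; rewrite ?eqxx /= => H //; apply/orP; first (right; apply/eqP; lia).
    by move: H; rewrite h eqxx.
  + case: (m =P 0) => [->|nz] //=.
    rewrite eqxx /= => _; apply/orP; right; apply/eqP; lia.
- by move=> _; case: m => [|m] /=; rewrite ?eqxx ?orbT.
Qed.

Ltac fin := repeat (case: ifP => ?);
  repeat match goal with H : (_ != _) = false |- _ => move/negbFE/eqP: H => H; subst end;
  try (by left); try (by right); try (exfalso; lia).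

Lemma adjc_next rc c c' : adjc c c' -> nextc rc c = c' \/ nextc rc c' = c.
Proof.
case: rc => [[i0 k0]|]; case: c => [[i m]|]; case: c' => [[j l]|] //=;
 try (case/andP=> /eqP <- /orP[] /eqP <-); try (move/eqP ->); rewrite /= ?eqxx /=; fin.
Qed.

Lemma distc_next rc c : c != rc -> (distc rc (nextc rc c)).+1 = distc rc c.
Proof.
case: rc => [[i0 k0]|]; case: c => [[i m]|] //= H;
 repeat (case: ifP => ?);
 repeat match goal with H : (_ != _) = false |- _ => move/negbFE/eqP: H => H; subst end;
 rewrite /= ?eqxx /=; try lia;
 try (match goal with H : (?x == ?x) = false |- _ => by rewrite eqxx in H end).
have E : m = k0 by lia.
by rewrite E eqxx in H.
Qed.

Lemma nextc2 rc c : c != rc -> nextc rc (nextc rc c) != c.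
Proof.
move=> h; case: (nextc rc c =P rc) => [->|/eqP h2].
  by rewrite nextc_r eq_sym.
apply/eqP=> h3; have := distc_next h; have := distc_next h2; rewrite h3; lia.
Qed.


Definition dec (c : code) : V :=
  match c with
  | None => None
  | Some (i, m) =>
    match (insub m : option 'I_(lam i)) with
    | Some k => Some (@Tagged _ i (fun i => 'I_(lam i)) k)
    | None => None
    end
  end.

Definition valid (c : code) : bool :=
  match c with None => true | Some (i, m) => m < lam i end.

Lemma enc_dec c : valid c -> enc (dec c) = c.
Proof. by case: c => [[i m]|] //= h; rewrite insubT. Qed.

Lemma valid_enc x : valid (enc x).
Proof. by case: x => [[i k]|] //=. Qed.

Lemma valid_nextc rc c : valid rc -> valid c -> valid (nextc rc c).
Proof.
case: rc => [[i0 k0]|]; case: c => [[i m]|] //= h1 h2;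
 repeat (case: ifP => ?);
 repeat match goal with H : (_ != _) = false |- _ => move/negbFE/eqP: H => H; subst end;
 rewrite /=; try lia.
Qed.

Variable r : V.
Definition next (x : V) : V := dec (nextc (enc r) (enc x)).

Lemma enc_next x : enc (next x) = nextc (enc r) (enc x).
Proof. by rewrite enc_dec // valid_nextc // valid_enc. Qed.

Lemma neq_enc x : (x != r) = (enc x != enc r).
Proof. by rewrite (inj_eq enc_inj). Qed.

Lemma next_r : next r = r.
Proof. by apply: enc_inj; rewrite enc_next nextc_r. Qed.

Lemma adj_next x : x != r -> adj x (next x).
Proof. by rewrite neq_enc adj_enc enc_next; apply: adj_nextc. Qed.

Lemma adj_next_or x y : adj x y -> next x = y \/ next y = x.
Proof.
rewrite adj_enc => /(adjc_next (enc r)) [] h; [left|right];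
 by apply: enc_inj; rewrite enc_next.
Qed.

Lemma next2 x : x != r -> next (next x) != x.
Proof.
rewrite neq_enc => /nextc2 h; apply/eqP => /(congr1 enc).
by rewrite !enc_next; apply/eqP.
Qed.

Lemma adj_irr x : adj x x = false.
Proof. case: x => [[i k]|] //=; rewrite eqxx /=; apply/negbTE; rewrite negb_or; apply/andP; split; apply/eqP; lia. Qed.

Definition hset (x : V) : {set V} := [set x; next x].

Lemma hset_edge x : x != r -> is_edge (adj) (hset x).
Proof. move=> h; apply/existsP; exists x; apply/existsP; exists (next x). by rewrite adj_next // eqxx. Qed.

Lemma hset_inj x y : x != r -> y != r -> hset x = hset y -> x = y.
Proof.
move=> hx hy e.
have : x \in hset y by rewrite -e /hset !inE eqxx.
rewrite /hset !inE => /orP[/eqP //|/eqP ex].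
have : y \in hset x by rewrite e /hset !inE eqxx.
rewrite /hset !inE => /orP[/eqP -> //|/eqP ey].
by move: (next2 hy); rewrite -ex -ey eqxx.
Qed.

End Spider.

Section Main.
Variables (d : nat) (lam : 'I_d -> nat).
Local Notation V := (spider_vertex lam).
Local Notation adj := (@spider_adj d lam).
Local Notation L := (line_vertex adj).
Variable r : V.
Variable P : {set {set V}}.
Hypothesis HP : partition P [set: V].
Variable B0 : {set V}.
Hypothesis HB0 : B0 \in P.
Hypothesis HB0r : B0 = [set r].

Definition BL (B : {set V}) : {set L} := [set E : L | val E \in hset r @: B].

Lemma notr B : B \in P -> B != B0 -> r \notin B.
Proof.
move=> hB hne; case/and3P: HP => _ /trivIsetP Ht _.
have := Ht _ _ hB HB0 hne => /disjointFl; rewrite HB0r => ->//; exact: set11.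
Qed.

Lemma notr' B x : B \in P -> B != B0 -> x \in B -> x != r.
Proof. by move=> hB hne hx; apply: contraNneq (notr hB hne) => <-. Qed.

Lemma BLP B E : E \in BL B -> exists2 x, x \in B & val E = hset r x.
Proof. by rewrite inE => /imsetP[x hx ->]; exists x. Qed.

Lemma BL_mem (B : {set V}) x (hx : x != r) : x \in B -> (Sub (hset r x) (hset_edge hx) : L) \in BL B.
Proof. by move=> hxB; rewrite inE /=; apply: imset_f. Qed.

Lemma card_BL B : B \in P -> B != B0 -> #|BL B| = #|B|.
Proof.
move=> hB hne.
rewrite -(card_imset _ val_inj).
have -> : val @: BL B = hset r @: B.
  apply/setP => S; apply/imsetP/imsetP.
  - by case=> E; rewrite inE => /imsetP[x hx ->] ->; exists x.
  - case=> x hx ->; have hxr := notr' hB hne hx.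
    by exists (Sub (hset r x) (hset_edge hxr)); [exact: BL_mem|].
apply: card_in_imset => x y hx hy; apply: hset_inj; exact: (notr' hB hne).
Qed.

Lemma BL_disj B B' E : B \in P -> B != B0 -> B' \in P -> B' != B0 ->
  E \in BL B -> E \in BL B' -> B = B'.
Proof.
move=> hB hne hB' hne' /BLP [x hx ex] /BLP [y hy ey].
have exy : x = y by apply: (hset_inj (notr' hB hne hx) (notr' hB' hne' hy)); rewrite -ex -ey.
subst y; apply/eqP; apply: contraT => hneq.
case/and3P: HP => _ /trivIsetP Ht _.
by have := Ht _ _ hB hB' hneq => /disjointFl /(_ hy); rewrite hx.
Qed.

Lemma nonempty B : B \in P -> exists x, x \in B.
Proof.
move=> hB; case/and3P: HP => _ _ H0.
case: (set_0Vmem B) => [e|[x hx]]; last by exists x.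
by move: H0; rewrite -e hB.
Qed.

Lemma BL_inj : {in P :\ B0 &, injective BL}.
Proof.
move=> B B'; rewrite !inE => /andP[hne hB] /andP[hne' hB'] e.
have [x hx] := nonempty hB.
have hxr := notr' hB hne hx.
have := BL_mem hxr hx; rewrite e => h.
exact: (BL_disj hB hne hB' hne' (BL_mem hxr hx) h).
Qed.

Lemma BL_cover (E : L) : exists2 B, B \in P :\ B0 & E \in BL B.
Proof.
case: E => S hS.
have [a [ha eS]] : exists a, a != r /\ S = hset r a.
  case/existsP: hS => a /existsP [b /andP[hab /eqP eS]].
  case: (adj_next_or r hab) => h.
  - exists a; split; last by rewrite /hset h.
    apply: contraTneq hab => ea; by rewrite -h ea next_r adj_irr.
  - exists b; split; last by rewrite /hset h setUC.
    apply: contraTneq hab => eb; by rewrite -h eb next_r adj_irr.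
subst S.
case/and3P: HP => /eqP Hcov _ _.
have : a \in cover P by rewrite Hcov inE.
case/bigcupP => B hB haB.
exists B.
  rewrite !inE hB andbT; apply: contraNneq ha => eB.
  by move: haB; rewrite eB HB0r inE.
rewrite inE /=; exact: imset_f.
Qed.

Lemma BL_conn B : B \in P -> B != B0 -> induces_connected adj B ->
  induces_connected (@line_adj _ adj) (BL B).
Proof.
move=> hB hne /forall_inP Hc.
apply/forall_inP => E hE; apply/forall_inP => F hF.
have [x hx ex] := BLP hE; have [y hy ey] := BLP hF.
have := forall_inP (Hc x hx) y hy => /connectP [p hp hl].
elim: p x E hE hx ex hp hl => [|z p IH] x E hE hx ex /=.
  move=> _ exy; subst y; have -> : E = F by apply: val_inj; rewrite ex ey.
  exact: connect0.
case/andP => /and3P[hxz _ hz] hp hl.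
have hxr := notr' hB hne hx; have hzr := notr' hB hne hz.
pose E' : L := Sub (hset r z) (hset_edge hzr).
have hE' : E' \in BL B by exact: BL_mem.
apply: connect_trans (IH z E' hE' hz erefl hp hl).
apply: connect1; apply/and3P; split => //; rewrite /line_adj.
apply/andP; split.
  apply/eqP => /(congr1 val); rewrite ex /= => /(hset_inj hxr hzr) exz.
  by move: hxz; rewrite exz adj_irr.
rewrite ex /=; apply/set0Pn.
case: (adj_next_or r hxz) => h.
- by exists z; rewrite inE /hset -h !inE !eqxx orbT.
- by exists x; rewrite inE /hset -h !inE !eqxx orbT.
Qed.

End Main.

Lemma geq_total : total geq. Proof. by move=> a b; rewrite /= leq_total. Qed.
Lemma geq_trans : transitive geq. Proof. by move=> a b c /= h1 h2; apply: leq_trans h2 h1. Qed.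
Lemma geq_anti : antisymmetric geq. Proof. by move=> a b /= h; apply/anti_leq; rewrite andbC. Qed.

Theorem proposition6p2 (d : nat) (lam : 'I_d -> nat) :
  (forall i, 0 < lam i) ->
  (forall mu, is_intpart #|@spider_vertex d lam| mu ->
     has_connected_partition (@spider_adj d lam) mu) ->
  forall nu, is_intpart (#|@spider_vertex d lam| - 1) nu ->
     has_connected_partition (@line_adj _ (@spider_adj d lam)) nu.
Proof.
move=> _ Hall nu /and3P[Hsort Hpos /eqP Hsum].
have Hn : 0 < #|@spider_vertex d lam| by rewrite /spider_vertex card_option.
have Hmu : is_intpart #|@spider_vertex d lam| (sort geq (1 :: nu)).
  apply/and3P; split.
  - exact: sort_sorted geq_total _.
  - by rewrite all_sort /= Hpos.
  - by rewrite (perm_sumn (permEl (perm_sort _ _))) /= Hsum add1n subn1 prednK.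
have [P [HP Hconn Hsz]] := Hall _ Hmu.
have Hperm : perm_eq [seq #|B : {set _}| | B : {set _} in P] (1 :: nu).
  by apply/(perm_sortP geq_total geq_trans geq_anti).
have : 1 \in [seq #|B : {set _}| | B : {set _} in P] by rewrite (perm_mem Hperm) inE eqxx.
case/imageP => B0 HB0 /esym /eqP /cards1P [r HB0r].
pose P' := BL r @: (P :\ B0).
exists P'; split.
- apply/and3P; split.
  + apply/eqP/setP => E; rewrite inE; apply/bigcupP.
    have [B hB hE] := BL_cover HP HB0r E.
    by exists (BL r B); [exact: imset_f|].
  + apply/trivIsetP => C C' /imsetP[B hB ->] /imsetP[B' hB' ->] hne.
    move: hB hB'; rewrite !in_setD1 => /andP[hn hB] /andP[hn' hB'].
    rewrite -setI_eq0; apply/eqP/setP => E; rewrite in_setI in_set0.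
    apply/negbTE/andP => [[h1 h2]].
    have e := BL_disj HP HB0 HB0r hB hn hB' hn' h1 h2.
    by move: hne; rewrite e eqxx.
  + apply/imsetP => [[B hB e]].
    move: hB; rewrite in_setD1 => /andP[hn hB].
    have [x hx] := nonempty HP hB.
    have hxr := notr' HP HB0 HB0r hB hn hx.
    by move: (BL_mem hxr hx); rewrite -e inE.
- move=> C /imsetP[B hB ->]; move: hB; rewrite in_setD1 => /andP[hn hB].
  exact: (BL_conn HP HB0 HB0r hB hn (Hconn B hB)).
- have p1 : perm_eq (enum P) (B0 :: enum (P :\ B0)).
    apply: uniq_perm; first exact: enum_uniq.
      by rewrite /= enum_uniq mem_enum !inE eqxx.
    by move=> C; rewrite !inE !mem_enum !inE; case: eqP => // ->.
  have p2 : perm_eq (enum P') (map (BL r) (enum (P :\ B0))).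
    apply: uniq_perm; first exact: enum_uniq.
      rewrite map_inj_in_uniq ?enum_uniq //.
      by move=> B B'; rewrite !mem_enum; apply: BL_inj.
    move=> C; rewrite mem_enum; apply/imsetP/mapP => [[B hB ->]|[B hB ->]]; exists B => //;
      by rewrite ?mem_enum in hB *.
  have e3 : map (fun C : {set line_vertex (@spider_adj d lam)} => #|C|) (map (BL r) (enum (P :\ B0))) = map (fun B : {set spider_vertex lam} => #|B|) (enum (P :\ B0)).
    rewrite -map_comp; apply/eq_in_map => B; rewrite mem_enum in_setD1 => /andP[hn hB] /=.
    exact: (card_BL HP HB0 HB0r hB hn).
  have Hc0 : #|B0| = 1 by rewrite HB0r cards1.
  have p4 : perm_eq (map (fun B : {set spider_vertex lam} => #|B|) (enum (P :\ B0))) nu.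
    have p1' := perm_map (fun B : {set spider_vertex lam} => #|B|) p1.
    rewrite perm_sym in p1'; have := perm_trans p1' Hperm.
    by rewrite /= Hc0 perm_cons.
  have p5 : perm_eq [seq #|C : {set _}| | C : {set _} in P'] nu.
    apply: perm_trans p4; rewrite -e3; exact: perm_map p2.
  move/(perm_sortP geq_total geq_trans geq_anti): p5 => ->.
  exact: sorted_sort geq_trans _ Hsort.
Qed.
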